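(* Let $A=[a_{ij}]$ be a symmetric $n\times n$ real matrix all of whose entries (including diagonal entries) lie in $\{1,-1\}$, and let $E(x_1,\dots,x_n)=\sum_{i=1}^n a_{ii}x_i^2+2\sum_{i<j}a_{ij}x_ix_j$. Then $E(x_1,\dots,x_n)\ge 0$ for all $(x_1,\dots,x_n)\in\mathbb{R}^n$ if and only if there exist $b_1,\dots,b_n\in\{1,-1\}$ such that $E(x_1,\dots,x_n)=(b_1x_1+b_2x_2+\dots+b_nx_n)^2$ for all $(x_1,\dots,x_n)\in\mathbb{R}^n$. *)

(* Defs.v *)
From mathcomp Require Import all_boot all_order all_algebra.
From mathcomp Require Import reals.
Set Implicit Arguments. Unset Strict Implicit. Unset Printing Implicit Defensive.
Import Order.TTheory GRing.Theory Num.Theory.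
Local Open Scope ring_scope.

Definition quadE (R : ringType) (n : nat) (A : 'M[R]_n) (x : 'I_n -> R) : R :=
  \sum_(i < n) A i i * x i ^+ 2
  + 2 * \sum_(i < n) \sum_(j < n | (i < j)%N) A i j * x i * x j.

Definition pm1 (R : ringType) (a : R) : Prop := a = 1 \/ a = -1.

(* Main.v *)
Require Import Defs.
From mathcomp Require Import all_boot all_order all_algebra.
From mathcomp Require Import reals.
From mathcomp Require Import ring lra.
Import Order.TTheory GRing.Theory Num.Theory.
Local Open Scope ring_scope.

Lemma split_row (R : ringType) n (F : 'I_n -> R) (i : 'I_n) :
  \sum_j F j = F i + \sum_(j : 'I_n | (i < j)%N) F j + \sum_(j : 'I_n | (j < i)%N) F j.
Proof.
rewrite (bigD1 i) //= (bigID (fun j : 'I_n => (i < j)%N)) /= addrA.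
congr (_ + _ + _); apply: eq_bigl => j /=; rewrite -(inj_eq val_inj) /=;
  case: ltngtP => //= ->; by rewrite eqxx.
Qed.

Definition Qf {R : ringType} {n} (A : 'M[R]_n) (x : 'I_n -> R) :=
  \sum_i \sum_j A i j * x i * x j.

Lemma quadE_Q (R : comRingType) n (A : 'M[R]_n) x : A^T = A -> quadE A x = Qf A x.
Proof.
move=> hs; rewrite /quadE /Qf.
rewrite [RHS](eq_bigr (fun i => A i i * x i * x i + \sum_(j : 'I_n | (i < j)%N) A i j * x i * x j
   + \sum_(j : 'I_n | (j < i)%N) A i j * x i * x j)); last by move=> i _; exact: split_row.
rewrite !big_split /= -addrA; congr (_ + _).
  by apply: eq_bigr => i _; rewrite expr2 mulrA.
rewrite mulr_natl mulr2n; congr (_ + _).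
rewrite [RHS](eq_bigr (fun i : 'I_n => \sum_(j : 'I_n) (if (j < i)%N then A i j * x i * x j else 0)));
  last by move=> i _; rewrite big_mkcond.
rewrite exchange_big /=; apply: eq_bigr => i _; rewrite big_mkcond /=.
apply: eq_bigr => j _; case: ifP => // _.
have -> : A j i = A i j by rewrite -[in RHS]hs mxE.
ring.
Qed.

Lemma sum_delta (R : ringType) n (F : 'I_n -> R) (i : 'I_n) :
  \sum_l F l * (l == i)%:R = F i.
Proof.
rewrite (bigD1 i) //= eqxx mulr1 big1 ?addr0 // => l /negbTE ->; by rewrite mulr0.
Qed.

Definition x3 {R : ringType} {n} (c1 c2 c3 : R) (i j k : 'I_n) : 'I_n -> R :=
  fun l => c1 * (l == i)%:R + c2 * (l == j)%:R + c3 * (l == k)%:R.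

Lemma sum_x3 (R : comRingType) n (G : 'I_n -> R) c1 c2 c3 i j k :
  \sum_l G l * x3 c1 c2 c3 i j k l = c1 * G i + c2 * G j + c3 * G k.
Proof.
rewrite (eq_bigr (fun l => (G l * c1) * (l == i)%:R + (G l * c2) * (l == j)%:R
   + (G l * c3) * (l == k)%:R)); last by move=> l _; rewrite /x3; ring.
rewrite !big_split /= !sum_delta; ring.
Qed.

Lemma Q3 (R : comRingType) n (A : 'M[R]_n) c1 c2 c3 i j k :
  Qf A (x3 c1 c2 c3 i j k) =
  c1 * (c1 * A i i + c2 * A i j + c3 * A i k)
  + c2 * (c1 * A j i + c2 * A j j + c3 * A j k)
  + c3 * (c1 * A k i + c2 * A k j + c3 * A k k).
Proof.
rewrite /Qf.
rewrite (eq_bigr (fun p => \sum_l (A p l * x3 c1 c2 c3 i j k p) * x3 c1 c2 c3 i j k l));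
  last by [].
rewrite (eq_bigr (fun p => (c1 * A p i + c2 * A p j + c3 * A p k) * x3 c1 c2 c3 i j k p));
  last by move=> p _; rewrite sum_x3; ring.
by rewrite sum_x3.
Qed.

Theorem mainTheorem3 (R : realType) (n : nat) (A : 'M[R]_n)
  (hsym : A^T = A) (hpm : forall i j, pm1 (A i j)) :
  (forall x : 'I_n -> R, 0 <= quadE A x) <->
  (exists b : 'I_n -> R, (forall i, pm1 (b i)) /\
     forall x : 'I_n -> R, quadE A x = (\sum_(i < n) b i * x i) ^+ 2).
Proof.
split; last first.
  by move=> [b [_ hb]] x; rewrite hb sqr_ge0.
move=> hpos.
have symA : forall i j, A j i = A i j by move=> i j; rewrite -[in RHS]hsym mxE.
have H3 : forall c1 c2 c3 i j k, 0 <= Qf A (x3 c1 c2 c3 i j k).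
  by move=> *; rewrite -quadE_Q.
have hdiag : forall i, A i i = 1.
  move=> i; have := H3 1 0 0 i i i; rewrite Q3.
  by case: (hpm i i) => -> // h; lra.
case: n A hsym hpm hpos symA H3 hdiag => [|n] A hsym hpm hpos symA H3 hdiag.
  exists (fun _ => 1); split; first by move=> _; left.
  by move=> x; rewrite /quadE !big_ord0 mulr0 addr0 expr2 mulr0.
have hoff : forall j k, A j k = A ord0 j * A ord0 k.
  move=> j k; have := H3 1 (- A ord0 j) (- A ord0 k) ord0 j k; rewrite Q3.
  rewrite (symA ord0 j) (symA ord0 k) (symA j k) !hdiag.
  case: (hpm ord0 j) => ->; case: (hpm ord0 k) => ->; case: (hpm j k) => -> h; lra.
exists (fun k => A ord0 k); split; first by move=> i; apply: hpm.
move=> x; rewrite quadE_Q // /Qf expr2 mulr_suml; apply: eq_bigr => i _.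
rewrite mulr_sumr; apply: eq_bigr => j _; rewrite (hoff i j); ring.
Qed.
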